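(* Let $\mathbf K$ be an M$\Delta$C. Consider the conditions: (a) there exist two proper coprime complementary thick ideals of $\mathbf K$; (b) there exist two proper coprime complementary principal ideals of $\mathbf K$; (c) $\operatorname{Spc}\mathbf K$ is disconnected, i.e. there exist proper disjoint closed subsets $Z_1,Z_2$ with $\operatorname{Spc}\mathbf K=Z_1\sqcup Z_2$. Then (a) $\Leftrightarrow$ (b), and these imply (c). If moreover either (i) $\mathbf K$ is generated by a single object $G$ as a thick (triangulated) subcategory, or (ii) $\operatorname{Spc}\mathbf K$ is a Noetherian topological space, then (a), (b), (c) are all equivalent.
   Context: M$\Delta$C: triangulated category with monoidal structure $(\otimes,\mathbf 1)$, $\otimes$ exact in each variable. Thick ideal: full triangulated subcategory closed under direct summands and two-sided tensoring with arbitrary objects; $\langle\mathcal S\rangle$ the smallest thick ideal containing $\mathcal S$; principal ideal: $\langle A\rangle$. $\mathbf I,\mathbf J$ coprime if $\langle\mathbf I\cup\mathbf J\rangle=\mathbf K$. Prime ideal: proper thick ideal $\mathbf P$ such that $\mathbf I\otimes\mathbf J\subseteq\mathbf P$ for thick ideals $\mathbf I,\mathbf J$ implies $\mathbf I\subseteq\mathbf P$ or $\mathbf J\subseteq\mathbf P$. The prime radical of $\mathbf K$ is the intersection of all prime ideals. Two thick ideals are complementary if their intersection is contained in the prime radical. $\operatorname{Spc}\mathbf K$: set of prime ideals with closed sets generated (by intersections) from $V(A)=\{\mathbf P:A\notin\mathbf P\}$. *)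

(* Defs.v *)
From HB Require Import structures.
From mathcomp Require Import all_boot all_algebra.
Set Implicit Arguments. Unset Strict Implicit. Unset Printing Implicit Defensive.
Import GRing.Theory.
Local Open Scope ring_scope.

Record PreaddCat := {
  obj :> Type;
  hom : obj -> obj -> zmodType;
  idm : forall X, hom X X;
  comp : forall {X Y Z}, hom Y Z -> hom X Y -> hom X Z;
  compA : forall X Y Z W (h : hom Z W) (g : hom Y Z) (f : hom X Y),
      comp h (comp g f) = comp (comp h g) f;
  comp1m : forall X Y (f : hom X Y), comp (idm Y) f = f;
  compm1 : forall X Y (f : hom X Y), comp f (idm X) = f;
  compDl : forall X Y Z (g g' : hom Y Z) (f : hom X Y),
      comp (g + g') f = comp g f + comp g' f;
  compDr : forall X Y Z (g : hom Y Z) (f f' : hom X Y),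
      comp g (f + f') = comp g f + comp g f'
}.
Arguments idm {p} X.
Arguments comp {p X Y Z}.
Arguments hom {p}.

Section PreaddDefs.
Variable C : PreaddCat.

Definition isIso (X Y : C) (f : hom X Y) : Prop :=
  exists g : hom Y X, comp g f = idm X /\ comp f g = idm Y.

Definition isomorphic (X Y : C) : Prop := exists f : hom X Y, isIso f.

Definition is_zero_obj (Z : C) : Prop :=
  (forall X (f : hom Z X), f = 0) /\ (forall X (f : hom X Z), f = 0).

Definition is_biprod (X Y S : C) (i1 : hom X S) (i2 : hom Y S)
    (p1 : hom S X) (p2 : hom S Y) : Prop :=
  [/\ comp p1 i1 = idm X, comp p2 i2 = idm Y, comp p2 i1 = 0, comp p1 i2 = 0
    & comp i1 p1 + comp i2 p2 = idm S].

Definition is_summand (X S : C) : Prop :=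
  exists (Y : C) (i1 : hom X S) (i2 : hom Y S) (p1 : hom S X) (p2 : hom S Y),
    is_biprod i1 i2 p1 p2.
End PreaddDefs.

Record TriCat := {
  tc :> PreaddCat;
  tc_zero : exists Z : tc, is_zero_obj Z;
  tc_biprod : forall X Y : tc, exists (S : tc) (i1 : hom X S) (i2 : hom Y S)
      (p1 : hom S X) (p2 : hom S Y), is_biprod i1 i2 p1 p2;
  sh : tc -> tc;
  shm : forall {X Y : tc}, hom X Y -> hom (sh X) (sh Y);
  shm_id : forall X, shm (idm X) = idm (sh X);
  shm_comp : forall X Y Z (g : hom Y Z) (f : hom X Y),
      shm (comp g f) = comp (shm g) (shm f);
  shm_add : forall X Y (f f' : hom X Y), shm (f + f') = shm f + shm f';
  shm_inj : forall X Y (f f' : hom X Y), shm f = shm f' -> f = f';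
  shm_surj : forall X Y (g : hom (sh X) (sh Y)), exists f : hom X Y, shm f = g;
  sh_esurj : forall Y : tc, exists X : tc, isomorphic (sh X) Y;
  dist : forall {X Y Z : tc}, hom X Y -> hom Y Z -> hom Z (sh X) -> Prop;
  dist_iso : forall X Y Z X' Y' Z' (f : hom X Y) (g : hom Y Z) (h : hom Z (sh X))
      (f' : hom X' Y') (g' : hom Y' Z') (h' : hom Z' (sh X'))
      (a : hom X X') (b : hom Y Y') (c : hom Z Z'),
      isIso a -> isIso b -> isIso c ->
      comp b f = comp f' a -> comp c g = comp g' b -> comp (shm a) h = comp h' c ->
      dist f g h -> dist f' g' h';
  dist_id : forall (X Z : tc), is_zero_obj Z ->
      dist (idm X) (0 : hom X Z) (0 : hom Z (sh X));
  dist_ext : forall X Y (f : hom X Y), exists (Z : tc) (g : hom Y Z) (h : hom Z (sh X)),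
      dist f g h;
  dist_rot : forall X Y Z (f : hom X Y) (g : hom Y Z) (h : hom Z (sh X)),
      dist f g h <-> dist g h (- shm f);
  dist_morph : forall X Y Z X' Y' Z' (f : hom X Y) (g : hom Y Z) (h : hom Z (sh X))
      (f' : hom X' Y') (g' : hom Y' Z') (h' : hom Z' (sh X'))
      (a : hom X X') (b : hom Y Y'),
      dist f g h -> dist f' g' h' -> comp b f = comp f' a ->
      exists c : hom Z Z', comp c g = comp g' b /\ comp (shm a) h = comp h' c;
  dist_oct : forall X Y Z Z' X' Y' (f : hom X Y) (g : hom Y Z)
      (u : hom Y Z') (d : hom Z' (sh X))
      (v : hom Z X') (e : hom X' (sh Y))
      (w : hom Z Y') (r : hom Y' (sh X)),
      dist f u d -> dist g v e -> dist (comp g f) w r ->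
      exists (al : hom Z' Y') (be : hom Y' X'),
        [/\ dist al be (comp (shm u) e),
            comp al u = comp w g, comp r al = d,
            comp be w = v & comp e be = comp (shm f) r]
}.
Arguments sh {t}.
Arguments shm {t X Y}.
Arguments dist {t X Y Z}.

(* Monoidal triangulated categories (MDeltaC): a (not necessarily     *)
(* braided) monoidal structure whose tensor is exact in each variable.*)
Record MDC := {
  mtc :> TriCat;
  tens : mtc -> mtc -> mtc;
  tensm : forall {X X' Y Y' : mtc}, hom X X' -> hom Y Y' -> hom (tens X Y) (tens X' Y');
  tensm_id : forall X Y, tensm (idm X) (idm Y) = idm (tens X Y);
  tensm_comp : forall X X' X'' Y Y' Y'' (f : hom X X') (f' : hom X' X'')
      (g : hom Y Y') (g' : hom Y' Y''),
      tensm (comp f' f) (comp g' g) = comp (tensm f' g') (tensm f g);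
  tensm_addl : forall X X' Y Y' (f f' : hom X X') (g : hom Y Y'),
      tensm (f + f') g = tensm f g + tensm f' g;
  tensm_addr : forall X X' Y Y' (f : hom X X') (g g' : hom Y Y'),
      tensm f (g + g') = tensm f g + tensm f g';
  tunit : mtc;
  assoc : forall X Y Z, hom (tens (tens X Y) Z) (tens X (tens Y Z));
  assoc_iso : forall X Y Z, isIso (assoc X Y Z);
  assoc_nat : forall X X' Y Y' Z Z' (f : hom X X') (g : hom Y Y') (h : hom Z Z'),
      comp (assoc X' Y' Z') (tensm (tensm f g) h)
      = comp (tensm f (tensm g h)) (assoc X Y Z);
  lunit : forall X, hom (tens tunit X) X;
  lunit_iso : forall X, isIso (lunit X);
  lunit_nat : forall X X' (f : hom X X'),
      comp (lunit X') (tensm (idm tunit) f) = comp f (lunit X);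
  runit : forall X, hom (tens X tunit) X;
  runit_iso : forall X, isIso (runit X);
  runit_nat : forall X X' (f : hom X X'),
      comp (runit X') (tensm f (idm tunit)) = comp f (runit X);
  pentagon : forall W X Y Z,
      comp (assoc W X (tens Y Z)) (assoc (tens W X) Y Z)
      = comp (tensm (idm W) (assoc X Y Z))
             (comp (assoc W (tens X Y) Z) (tensm (assoc W X Y) (idm Z)));
  triangle_ax : forall X Y,
      comp (tensm (idm X) (lunit Y)) (assoc X tunit Y) = tensm (runit X) (idm Y);
  thetaL : forall X Y, hom (tens X (sh Y)) (sh (tens X Y));
  thetaL_iso : forall X Y, isIso (thetaL X Y);
  thetaL_nat : forall X Y Y' (g : hom Y Y'),
      comp (thetaL X Y') (tensm (idm X) (shm g)) = comp (shm (tensm (idm X) g)) (thetaL X Y);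
  tensL_exact : forall W X Y Z (f : hom X Y) (g : hom Y Z) (h : hom Z (sh X)),
      dist f g h ->
      dist (tensm (idm W) f) (tensm (idm W) g) (comp (thetaL W X) (tensm (idm W) h));
  thetaR : forall X Y, hom (tens (sh Y) X) (sh (tens Y X));
  thetaR_iso : forall X Y, isIso (thetaR X Y);
  thetaR_nat : forall X Y Y' (g : hom Y Y'),
      comp (thetaR X Y') (tensm (shm g) (idm X)) = comp (shm (tensm g (idm X))) (thetaR X Y);
  tensR_exact : forall W X Y Z (f : hom X Y) (g : hom Y Z) (h : hom Z (sh X)),
      dist f g h ->
      dist (tensm f (idm W)) (tensm g (idm W)) (comp (thetaR W X) (tensm h (idm W)))
}.
Arguments tens {m}.
Arguments tunit {m}.

Section Ideals.
Variable K : MDC.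

Definition subcat := K -> Prop.

Definition triangulated_sub (I : subcat) : Prop :=
  [/\ exists Z, is_zero_obj Z /\ I Z,
      forall X Y : K, isomorphic X Y -> I X -> I Y,
      forall X : K, I X <-> I (sh X)
    & forall (X Y Z : K) (f : hom X Y) (g : hom Y Z) (h : hom Z (sh X)),
        dist f g h -> I X -> I Y -> I Z].

Definition thick_sub (I : subcat) : Prop :=
  triangulated_sub I /\ (forall X S : K, is_summand X S -> I S -> I X).

Definition thick_ideal (I : subcat) : Prop :=
  thick_sub I /\ (forall X Y : K, I X -> I (tens X Y) /\ I (tens Y X)).

Definition sub_incl (I J : subcat) : Prop := forall X, I X -> J X.

Definition gen_ideal (S : subcat) : subcat :=
  fun X => forall I, thick_ideal I -> sub_incl S I -> I X.

Definition principal (A : K) : subcat := gen_ideal (fun X => X = A).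

Definition proper_id (I : subcat) : Prop := exists X : K, ~ I X.

Definition coprime_id (I J : subcat) : Prop :=
  forall X : K, gen_ideal (fun Y => I Y \/ J Y) X.

Definition tens_incl (I J P : subcat) : Prop :=
  forall A B : K, I A -> J B -> P (tens A B).

Definition prime_ideal (P : subcat) : Prop :=
  [/\ thick_ideal P, proper_id P &
      forall I J, thick_ideal I -> thick_ideal J -> tens_incl I J P ->
        sub_incl I P \/ sub_incl J P].

Definition prime_radical : subcat := fun X => forall P, prime_ideal P -> P X.

Definition complementary (I J : subcat) : Prop :=
  sub_incl (fun X => I X /\ J X) prime_radical.

Definition thick_generated_by (G : K) : Prop :=
  forall I, thick_sub I -> I G -> forall X : K, I X.

Definition Spc := { P : subcat | prime_ideal P }.

Definition Vsupp (A : K) : Spc -> Prop := fun P => ~ (sval P) A.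

Definition spc_closed (Z : Spc -> Prop) : Prop :=
  exists S : K -> Prop, forall P : Spc, Z P <-> (forall A, S A -> Vsupp A P).

Definition spc_disconnected : Prop :=
  exists Z1 Z2 : Spc -> Prop,
    [/\ spc_closed Z1 /\ spc_closed Z2,
        (exists P, ~ Z1 P), (exists P, ~ Z2 P),
        (forall P, ~ (Z1 P /\ Z2 P)) & (forall P, Z1 P \/ Z2 P)].

Definition spc_noetherian : Prop :=
  forall Z : nat -> Spc -> Prop,
    (forall n, spc_closed (Z n)) ->
    (forall n P, Z n.+1 P -> Z n P) ->
    exists N, forall n, (N <= n)%N -> forall P, Z n P <-> Z N P.

End Ideals.

(* Main.v *)
Require Import Defs.
From mathcomp Require Import all_boot all_algebra.
From Stdlib Require Import Classical IndefiniteDescription.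
From mathcomp Require classical_sets.
Import Defs.
Set Implicit Arguments. Unset Strict Implicit. Unset Printing Implicit Defensive.
Import GRing.Theory.
Local Open Scope ring_scope.

Section Cat.
Variable C : PreaddCat.
Implicit Types X Y Z W : C.

Lemma comp0l X Y Z (f : hom X Y) : comp (0 : hom Y Z) f = 0.
Proof.
have e := compDl (0 : hom Y Z) 0 f; rewrite addr0 in e.
by rewrite -[LHS]addr0 in e; move/addrI: e.
Qed.

Lemma comp0r X Y Z (g : hom Y Z) : comp g (0 : hom X Y) = 0.
Proof.
have e := compDr g (0 : hom X Y) 0; rewrite addr0 in e.
by rewrite -[LHS]addr0 in e; move/addrI: e.
Qed.

Lemma iso_refl X : isomorphic X X.
Proof. by exists (idm X), (idm X); rewrite comp1m. Qed.

Lemma iso_sym X Y : isomorphic X Y -> isomorphic Y X.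
Proof. by move=> [f [g [h1 h2]]]; exists g, f. Qed.

Lemma iso_trans X Y Z : isomorphic X Y -> isomorphic Y Z -> isomorphic X Z.
Proof.
move=> [f [f' [h1 h2]]] [g [g' [k1 k2]]].
exists (comp g f), (comp f' g'); split.
- by rewrite compA -(compA f') k1 compm1.
- by rewrite compA -(compA g) h2 compm1.
Qed.

Lemma zeroP Z : is_zero_obj Z <-> idm Z = 0.
Proof.
split; first by move=> [_ h]; apply: h.
move=> e; split=> X f.
- by rewrite -(compm1 f) e comp0r.
- by rewrite -(comp1m f) e comp0l.
Qed.

Lemma zero_iso Z Z' : is_zero_obj Z -> is_zero_obj Z' -> isomorphic Z Z'.
Proof.
move=> /zeroP h /zeroP h'; exists 0, 0; split; by rewrite comp0l.
Qed.

Lemma iso_zero Z Z' : isomorphic Z Z' -> is_zero_obj Z -> is_zero_obj Z'.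
Proof.
move=> [f [g [_ h2]]] [_ hz]; apply/zeroP.
by rewrite -h2 (hz _ g) comp0r.
Qed.

End Cat.
Section Tri.
Variable T : TriCat.
Implicit Types X Y Z W : T.

Lemma shm0 X Y : shm (0 : hom X Y) = 0.
Proof.
have e := shm_add (0 : hom X Y) 0; rewrite addr0 in e.
by rewrite -[LHS]addr0 in e; move/addrI: e.
Qed.

Lemma sh_zero Z : is_zero_obj Z -> is_zero_obj (sh Z).
Proof. by move=> /zeroP h; apply/zeroP; rewrite -shm_id h shm0. Qed.

Lemma iso_sh X Y : isomorphic X Y -> isomorphic (sh X) (sh Y).
Proof.
move=> [f [g [h1 h2]]]; exists (shm f), (shm g).
by rewrite -!shm_comp h1 h2 !shm_id.
Qed.

Lemma dist_comp0 X Y Z (f : hom X Y) (g : hom Y Z) (h : hom Z (sh X)) :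
  dist f g h -> comp g f = 0.
Proof.
move=> d; have [Z0 hZ0] := tc_zero T.
have d0 := @dist_id T X Z0 hZ0.
have [c [e _]] := dist_morph (a := idm X) (b := f) d0 d erefl.
by rewrite -e comp0r.
Qed.

Lemma dist0_id W (Z0 : T) : is_zero_obj Z0 ->
  dist (0 : hom Z0 W) (idm W) (0 : hom W (sh Z0)).
Proof.
move=> hz; apply/dist_rot; rewrite shm0 oppr0.
exact: (@dist_id T W (sh Z0) (sh_zero hz)).
Qed.

Lemma weak_coker X Y Z W (f : hom X Y) (g : hom Y Z) (h : hom Z (sh X))
  (k : hom Y W) : dist f g h -> comp k f = 0 -> exists m : hom Z W, comp m g = k.
Proof.
move=> d e; have [Z0 hZ0] := tc_zero T.
have d0 := dist0_id W hZ0.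
have [c [e1 _]] := dist_morph (a := (0 : hom X Z0)) (b := k) d d0
   (etrans e (esym (comp0r _ _))).
by exists c; rewrite e1 comp1m.
Qed.

Lemma split_dist X Y S (i1 : hom X S) (i2 : hom Y S) (p1 : hom S X) (p2 : hom S Y) :
  is_biprod i1 i2 p1 p2 -> dist i1 p2 (0 : hom Y (sh X)).
Proof.
move=> [e11 e22 e21 e12 esum].
have [Z [g [h d]]] := dist_ext i1.
have [Z0 hZ0] := tc_zero T.
have h0 : h = 0.
  have d0 := @dist_id T X Z0 hZ0.
  have [c [_ e]] := dist_morph (a := idm X) (b := p1) d d0 (etrans e11 (esym (compm1 _))).
  by move: e; rewrite shm_id comp1m comp0l.
have gi1 := dist_comp0 d.
have [t et] := weak_coker d e21.
have tk : comp t (comp g i2) = idm Y by rewrite compA et.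
have kt : comp (comp g i2) t = idm Z.
  apply/eqP; rewrite -subr_eq0; apply/eqP.
  have dr := proj1 (dist_rot i1 g h) d.
  suff H : comp (comp (comp g i2) t - idm Z) g = 0.
    have [m em] := weak_coker dr H.
    by rewrite -em h0 comp0r.
  rewrite compDl -compA et -compA.
  have -> : comp i2 p2 = idm S - comp i1 p1 by rewrite -esum addrC addKr.
  have -> : comp (- idm Z) g = - g.
    by apply/eqP; rewrite -addr_eq0 -{2}(comp1m g) -compDl addNr comp0l.
  rewrite compDr compm1.
  have -> : comp g (- comp i1 p1) = - comp (comp g i1) p1.
    by apply/eqP; rewrite -addr_eq0 -compA -compDr addNr comp0r.
  by rewrite gi1 comp0l oppr0 addr0 subrr.
apply: (dist_iso (a := idm X) (b := idm S) (c := t) _ _ _ _ _ _ d).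
- by exists (idm X); rewrite comp1m.
- by exists (idm S); rewrite comp1m.
- by exists (comp g i2).
- by rewrite comp1m compm1.
- by rewrite et compm1.
- by rewrite h0 comp0r comp0l.
Qed.

End Tri.
Section Mon.
Variable K : MDC.
Implicit Types X Y Z W : K.

Lemma tensm0l X X' Y Y' (g : hom Y Y') : tensm (0 : hom X X') g = 0.
Proof.
have e := tensm_addl (0 : hom X X') 0 g; rewrite addr0 in e.
by rewrite -[LHS]addr0 in e; move/addrI: e.
Qed.

Lemma tensm0r X X' Y Y' (f : hom X X') : tensm f (0 : hom Y Y') = 0.
Proof.
have e := tensm_addr f (0 : hom Y Y') 0; rewrite addr0 in e.
by rewrite -[LHS]addr0 in e; move/addrI: e.
Qed.

Lemma tens_iso X X' Y Y' : isomorphic X X' -> isomorphic Y Y' ->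
  isomorphic (tens X Y) (tens X' Y').
Proof.
move=> [f [f' [h1 h2]]] [g [g' [k1 k2]]].
exists (tensm f g), (tensm f' g').
by rewrite -!tensm_comp h1 h2 k1 k2 !tensm_id.
Qed.

Lemma tens_zero_l Z Y : is_zero_obj Z -> is_zero_obj (tens Z Y).
Proof. by move=> /zeroP h; apply/zeroP; rewrite -tensm_id h tensm0l. Qed.

Lemma tens_zero_r Z Y : is_zero_obj Z -> is_zero_obj (tens Y Z).
Proof. by move=> /zeroP h; apply/zeroP; rewrite -tensm_id h tensm0r. Qed.

Lemma iso_assoc X Y Z : isomorphic (tens (tens X Y) Z) (tens X (tens Y Z)).
Proof. by exists (assoc X Y Z); apply: assoc_iso. Qed.

Lemma iso_lunit X : isomorphic (tens tunit X) X.
Proof. by exists (lunit X); apply: lunit_iso. Qed.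

Lemma iso_shR X Y : isomorphic (tens (sh X) Y) (sh (tens X Y)).
Proof. by exists (thetaR Y X); apply: thetaR_iso. Qed.

Lemma iso_shL X Y : isomorphic (tens Y (sh X)) (sh (tens Y X)).
Proof. by exists (thetaL Y X); apply: thetaL_iso. Qed.

Lemma summand_tensR X S Y : is_summand X S -> is_summand (tens X Y) (tens S Y).
Proof.
move=> [Y0 [i1 [i2 [p1 [p2 [e1 e2 e3 e4 e5]]]]]].
exists (tens Y0 Y), (tensm i1 (idm Y)), (tensm i2 (idm Y)),
  (tensm p1 (idm Y)), (tensm p2 (idm Y)).
split; rewrite -?tensm_comp ?compm1 ?e1 ?e2 ?e3 ?e4 ?tensm_id ?tensm0l //.
by rewrite -tensm_addl e5 tensm_id.
Qed.

Lemma summand_tensL X S Y : is_summand X S -> is_summand (tens Y X) (tens Y S).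
Proof.
move=> [Y0 [i1 [i2 [p1 [p2 [e1 e2 e3 e4 e5]]]]]].
exists (tens Y Y0), (tensm (idm Y) i1), (tensm (idm Y) i2),
  (tensm (idm Y) p1), (tensm (idm Y) p2).
split; rewrite -?tensm_comp ?compm1 ?e1 ?e2 ?e3 ?e4 ?tensm_id ?tensm0r //.
by rewrite -tensm_addr e5 tensm_id.
Qed.

End Mon.
Section Thick.
Variable K : MDC.
Implicit Types X Y Z W S : K.
Implicit Types I J M L : subcat K.

Lemma ts_zero I Z : thick_sub I -> is_zero_obj Z -> I Z.
Proof.
move=> [[[Z0 [h0 i0]] hiso _ _] _] hz.
exact: hiso _ _ (zero_iso h0 hz) i0.
Qed.

Lemma ts_iso I X Y : thick_sub I -> isomorphic X Y -> I X -> I Y.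
Proof. by move=> [[_ hiso _ _] _]; apply: hiso. Qed.

Lemma ts_sh I X : thick_sub I -> I X <-> I (sh X).
Proof. by move=> [[_ _ hsh _] _]; apply: hsh. Qed.

Lemma ts_cone I X Y Z (f : hom X Y) (g : hom Y Z) (h : hom Z (sh X)) :
  thick_sub I -> dist f g h -> I X -> I Y -> I Z.
Proof. by move=> [[_ _ _ hc] _]; apply: hc. Qed.

Lemma ts_summand I X S : thick_sub I -> is_summand X S -> I S -> I X.
Proof. by move=> [_ hs]; apply: hs. Qed.

Lemma ts_middle I X Y Z (f : hom X Y) (g : hom Y Z) (h : hom Z (sh X)) :
  thick_sub I -> dist f g h -> I X -> I Z -> I Y.
Proof.
move=> tI d iX iZ.
have d2 := proj1 (dist_rot _ _ _) (proj1 (dist_rot f g h) d).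
apply/(ts_sh Y tI); apply: (ts_cone tI d2 iZ); exact/(ts_sh X tI).
Qed.

Lemma ts_biprod I X Y S (i1 : hom X S) (i2 : hom Y S) (p1 : hom S X) (p2 : hom S Y) :
  thick_sub I -> is_biprod i1 i2 p1 p2 -> I X -> I Y -> I S.
Proof.
move=> tI hb iX iY; exact: (ts_middle tI (split_dist hb) iX iY).
Qed.

Lemma mk_ts I :
  (forall Z, is_zero_obj Z -> I Z) ->
  (forall X Y, isomorphic X Y -> I X -> I Y) ->
  (forall X, I X -> I (sh X)) -> (forall X, I (sh X) -> I X) ->
  (forall X Y Z (f : hom X Y) (g : hom Y Z) (h : hom Z (sh X)),
        dist f g h -> I X -> I Y -> I Z) ->
  (forall X S, is_summand X S -> I S -> I X) -> thick_sub I.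
Proof.
move=> hz hi hs1 hs2 hc hsu; split=> //; split=> //.
- by have [Z0 h0] := tc_zero K; exists Z0; split=> //; apply: hz.
- by move=> X; split; [apply: hs1 | apply: hs2].
Qed.

Lemma inter_ts (Ix : Type) (P : Ix -> Prop) (F : Ix -> subcat K) :
  (forall i, P i -> thick_sub (F i)) -> thick_sub (fun X => forall i, P i -> F i X).
Proof.
move=> hF; apply: mk_ts.
- by move=> Z hz I fI; apply: ts_zero (hF _ fI) hz.
- by move=> X Y hXY hX I fI; apply: ts_iso (hF _ fI) hXY (hX _ fI).
- by move=> X hX I fI; apply/(ts_sh X (hF _ fI)); apply: hX.
- by move=> X hX I fI; apply/(ts_sh X (hF _ fI)); apply: hX.
- by move=> X Y Z f g h d hX hY I fI; apply: ts_cone (hF _ fI) d (hX _ fI) (hY _ fI).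
- by move=> X S hs hS I fI; apply: ts_summand (hF _ fI) hs (hS _ fI).
Qed.

Lemma preR_ts M Y : thick_sub M -> thick_sub (fun X => M (tens X Y)).
Proof.
move=> tM; apply: mk_ts.
- by move=> Z hz; apply: ts_zero tM (tens_zero_l Y hz).
- by move=> X X' hXX'; apply: ts_iso tM (tens_iso hXX' (iso_refl Y)).
- move=> X hX; apply: (ts_iso tM (iso_sym (iso_shR X Y))).
  exact: (proj1 (ts_sh (tens X Y) tM) hX).
- move=> X hX; apply: (proj2 (ts_sh (tens X Y) tM)); exact: (ts_iso tM (iso_shR X Y) hX).
- by move=> X X' Z f g h d; apply: ts_cone tM (tensR_exact Y d).
- by move=> X S hs; apply: ts_summand tM (summand_tensR Y hs).
Qed.

Lemma preL_ts M Y : thick_sub M -> thick_sub (fun X => M (tens Y X)).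
Proof.
move=> tM; apply: mk_ts.
- by move=> Z hz; apply: ts_zero tM (tens_zero_r Y hz).
- by move=> X X' hXX'; apply: ts_iso tM (tens_iso (iso_refl Y) hXX').
- move=> X hX; apply: (ts_iso tM (iso_sym (iso_shL X Y))).
  exact: (proj1 (ts_sh (tens Y X) tM) hX).
- move=> X hX; apply: (proj2 (ts_sh (tens Y X) tM)); exact: (ts_iso tM (iso_shL X Y) hX).
- by move=> X X' Z f g h d; apply: ts_cone tM (tensL_exact Y d).
- by move=> X S hs; apply: ts_summand tM (summand_tensL Y hs).
Qed.

End Thick.
Section Ideal.
Variable K : MDC.
Implicit Types X Y Z W S A B : K.
Implicit Types I J M L : subcat K.

Lemma ti_ts I : thick_ideal I -> thick_sub I.
Proof. by case. Qed.

Lemma ti_tensR I X {Y} : thick_ideal I -> I X -> I (tens X Y).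
Proof. by move=> [_ h] hX; case: (h X Y hX). Qed.


Lemma ti_tensL I X {Y} : thick_ideal I -> I X -> I (tens Y X).
Proof. by move=> [_ h] hX; case: (h X Y hX). Qed.


Lemma ti_iso I X Y : thick_ideal I -> isomorphic X Y -> I X -> I Y.
Proof. by move/ti_ts; apply: ts_iso. Qed.

Lemma mk_ti I : thick_sub I -> (forall X Y, I X -> I (tens X Y)) ->
  (forall X Y, I X -> I (tens Y X)) -> thick_ideal I.
Proof. by move=> t h1 h2; split=> // X Y hX; split; [apply: h1 | apply: h2]. Qed.

Lemma inter_ti (Ix : Type) (P : Ix -> Prop) (F : Ix -> subcat K) :
  (forall i, P i -> thick_ideal (F i)) -> thick_ideal (fun X => forall i, P i -> F i X).
Proof.
move=> hF; apply: mk_ti.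
- by apply: inter_ts => i Pi; apply: ti_ts (hF i Pi).
- by move=> X Y hX i Pi; apply: ti_tensR (hF i Pi) (hX i Pi).
- by move=> X Y hX i Pi; apply: ti_tensL (hF i Pi) (hX i Pi).
Qed.

Lemma ti_ext I J : (forall X, I X <-> J X) -> thick_ideal I -> thick_ideal J.
Proof.
move=> e tI; apply: mk_ti; last 2 first.
- by move=> X Y /e hX; apply/e; apply: ti_tensR.
- by move=> X Y /e hX; apply/e; apply: ti_tensL.
have tS := ti_ts tI; apply: mk_ts.
- by move=> Z hz; apply/e; apply: ts_zero tS hz.
- by move=> X Y hXY /e hX; apply/e; apply: ts_iso tS hXY hX.
- by move=> X /e hX; apply/e; apply/(ts_sh X tS).
- by move=> X /e hX; apply/e; apply/(ts_sh X tS).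
- by move=> X Y Z f g h d /e hX /e hY; apply/e; apply: ts_cone tS d hX hY.
- by move=> X Y hs /e hS; apply/e; apply: ts_summand tS hs hS.
Qed.

Lemma gen_ti (S : subcat K) : thick_ideal (gen_ideal S).
Proof.
apply: ti_ext (@inter_ti (subcat K) (fun I => thick_ideal I /\ sub_incl S I) id
   (fun i h => proj1 h)).
move=> X; split.
- by move=> h I tI sI; apply: h.
- by move=> h I [tI sI]; apply: h.
Qed.

Lemma gen_sub (S : subcat K) : sub_incl S (gen_ideal S).
Proof. by move=> X hX I tI sI; apply: sI. Qed.

Lemma gen_min (S : subcat K) I : thick_ideal I -> sub_incl S I -> sub_incl (gen_ideal S) I.
Proof. by move=> tI sI X hX; apply: hX. Qed.

Lemma gen_mono (S S' : subcat K) : sub_incl S S' -> sub_incl (gen_ideal S) (gen_ideal S').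
Proof. by move=> h; apply: gen_min (gen_ti S') _ => X /h; apply: gen_sub. Qed.

Lemma all_ti : thick_ideal (fun _ : K => True).
Proof.
have := @inter_ti False (fun _ => True) (fun _ _ => False) (fun i => match i with end).
apply: (fun h => _); move=> h; case: h => [[[[Z0 [h0 _]] _ _ _] _] _].
apply: mk_ti => //; apply: mk_ts => //.
Qed.

Lemma ti_unit I : thick_ideal I -> I tunit -> forall X, I X.
Proof.
move=> tI h1 X; apply: (ti_iso tI (iso_lunit X)); exact: ti_tensR.
Qed.

Lemma principal_self A : principal A A.
Proof. exact: gen_sub. Qed.

Lemma ti_biprod I X Y : thick_ideal I -> I X -> I Y ->
  exists S, [/\ I S, is_summand X S & is_summand Y S].
Proof.
move=> tI hX hY; have [S [i1 [i2 [p1 [p2 hb]]]]] := tc_biprod X Y.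
exists S; split.
- exact: ts_biprod (ti_ts tI) hb hX hY.
- by exists Y, i1, i2, p1, p2.
- exists X, i2, i1, p2, p1; case: hb => e1 e2 e3 e4 e5; split=> //.
  by rewrite addrC.
Qed.

Lemma lift_left (A B M : subcat K) : thick_ideal M ->
  (forall C Y, B Y -> B (tens C Y)) -> tens_incl A B M -> tens_incl (gen_ideal A) B M.
Proof.
move=> tM hB hAB.
pose D := fun X => forall Y, B Y -> (fun Y X => M (tens X Y)) Y X.
have tD : thick_ideal D.
  apply: mk_ti.
  - by apply: inter_ts => Y _; apply: preR_ts (ti_ts tM).
  - move=> X C hX Y hY /=; apply: (ti_iso tM (iso_sym (iso_assoc X C Y))).
    exact: hX (hB _ _ hY).
  - move=> X C hX Y hY /=; apply: (ti_iso tM (iso_sym (iso_assoc C X Y))).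
    exact: ti_tensL tM (hX _ hY).
have sAD : sub_incl A D by move=> X hX Y hY; apply: hAB.
by move=> X Y hX hY; apply: (gen_min tD sAD hX).
Qed.

Lemma lift_right (A B M : subcat K) : thick_ideal M ->
  (forall C X, A X -> A (tens X C)) -> tens_incl A B M -> tens_incl A (gen_ideal B) M.
Proof.
move=> tM hA hAB.
pose D := fun Y => forall X, A X -> (fun X Y => M (tens X Y)) X Y.
have tD : thick_ideal D.
  apply: mk_ti.
  - by apply: inter_ts => X _; apply: preL_ts (ti_ts tM).
  - move=> Y C hY X hX /=; apply: (ti_iso tM (iso_assoc X Y C)).
    exact: ti_tensR tM (hY _ hX).
  - move=> Y C hY X hX /=; apply: (ti_iso tM (iso_assoc X C Y)).
    exact: hY (hA _ _ hX).
have sBD : sub_incl B D by move=> Y hY X hX; apply: hAB.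
by move=> X Y hX hY; apply: (gen_min tD sBD hY).
Qed.

Lemma lift_both (A B M : subcat K) : thick_ideal M ->
  (forall C Y, B Y -> B (tens C Y)) -> tens_incl A B M ->
  tens_incl (gen_ideal A) (gen_ideal B) M.
Proof.
move=> tM hB hAB; apply: lift_right => //.
- by move=> C X hX; apply: ti_tensR (gen_ti A) hX.
- exact: lift_left.
Qed.

End Ideal.
Section Prime.
Variable K : MDC.
Implicit Types X Y Z W S : K.
Implicit Types I J M L : subcat K.

Lemma union_ti (F : subcat K -> Prop) : (exists I, F I) ->
  (forall I, F I -> thick_ideal I) ->
  (forall I J, F I -> F J -> sub_incl I J \/ sub_incl J I) ->
  thick_ideal (fun X => exists I, F I /\ I X).
Proof.
move=> [I0 FI0] hF htot; apply: mk_ti; last 2 first.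
- by move=> X Y [I [FI hX]]; exists I; split=> //; apply: ti_tensR (hF _ FI) hX.
- by move=> X Y [I [FI hX]]; exists I; split=> //; apply: ti_tensL (hF _ FI) hX.
apply: mk_ts.
- by move=> Z hz; exists I0; split=> //; apply: ts_zero (ti_ts (hF _ FI0)) hz.
- by move=> X Y hXY [I [FI hX]]; exists I; split=> //; apply: ti_iso (hF _ FI) hXY hX.
- by move=> X [I [FI hX]]; exists I; split=> //; apply/(ts_sh X (ti_ts (hF _ FI))).
- by move=> X [I [FI hX]]; exists I; split=> //; apply/(ts_sh X (ti_ts (hF _ FI))).
- move=> X Y Z f g h d [I [FI hX]] [J [FJ hY]].
  case: (htot _ _ FI FJ) => sub.
  + exists J; split=> //; apply: ts_cone (ti_ts (hF _ FJ)) d (sub _ hX) hY.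
  + exists I; split=> //; apply: ts_cone (ti_ts (hF _ FI)) d hX (sub _ hY).
- by move=> X S hs [I [FI hS]]; exists I; split=> //; apply: ts_summand (ti_ts (hF _ FI)) hs hS.
Qed.

Definition cand (Mset : K -> Prop) L I :=
  [/\ thick_ideal I, sub_incl L I & forall s, Mset s -> ~ I s].

Lemma maximal_cand (Mset : K -> Prop) L : thick_ideal L ->
  (forall s, Mset s -> ~ L s) ->
  exists M, cand Mset L M /\ forall B, cand Mset L B -> sub_incl M B -> sub_incl B M.
Proof.
move=> tL hL.
pose Pz := fun A : subcat K => (forall x, ~ A x) \/ cand Mset L A.
have [A [PA Amax]] : exists A : subcat K, Pz A /\
    (forall B : subcat K, classical_sets.proper A B -> ~ Pz B).
  apply: classical_sets.Zorn_bigcup => F FP Ftot.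
  case: (classic (exists I, F I /\ cand Mset L I)) => [ex|nex]; last first.
    left=> x [I FI Ix]; case: (FP I FI) => [e|c]; first exact: e Ix.
    by apply: nex; exists I.
  right.
  have tU : thick_ideal (fun X => exists I, (F I /\ cand Mset L I) /\ I X).
    apply: union_ti => //.
    - by move=> I [_ [tI _ _]].
    - by move=> I J [FI _] [FJ _]; apply: Ftot.
  split.
  - apply: ti_ext tU => X; split.
    + by move=> [I [[FI _] IX]]; exists I.
    + move=> [I FI IX]; exists I; split=> //; split=> //.
      by case: (FP I FI) => // e; case: (e X).
  - move=> X LX; case: ex => I [FI [_ sI _]]; exists I => //; exact: sI.
  - move=> s Ms [I FI Is]; case: (FP I FI) => [e|[_ _ h]]; first exact: e Is.
    exact: h s Ms Is.
have cA : cand Mset L A.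
  case: PA => // e; exfalso; apply: (Amax L); last by right; split=> //.
  split; first by move=> x /e.
  have [Z0 hz] := tc_zero K; move=> h.
  exact: e _ (h Z0 (ts_zero (ti_ts tL) hz)).
exists A; split=> // B cB sAB.
apply: NNPP => nsub; apply: (Amax B); last by right.
by split.
Qed.

Lemma avoid (Mset : K -> Prop) L : thick_ideal L -> (exists s, Mset s) ->
  (forall s t, Mset s -> Mset t -> exists u, Mset u /\
     forall M, thick_ideal M -> tens_incl (principal s) (principal t) M -> M u) ->
  (forall s, Mset s -> ~ L s) ->
  exists P, [/\ prime_ideal P, sub_incl L P & forall s, Mset s -> ~ P s].
Proof.
move=> tL [s0 Ms0] hclos hL.
have [M [[tM sLM aM] Mmax]] := maximal_cand tL hL.
exists M; split=> //; split=> //.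
  by exists s0; apply: aM.
move=> I J tI tJ hIJ.
have ext : forall I, thick_ideal I -> ~ sub_incl I M ->
    exists s, Mset s /\ gen_ideal (fun X => M X \/ I X) s.
  move=> I0 tI0 nI0; apply: NNPP => nex.
  have cG : cand Mset L (gen_ideal (fun X => M X \/ I0 X)).
    split; first exact: gen_ti.
    - by move=> X LX; apply: gen_sub; left; apply: sLM.
    - by move=> s Ms Gs; apply: nex; exists s.
  apply: nI0 => X I0X; apply: (Mmax _ cG); first by move=> Y MY; apply: gen_sub; left.
  by apply: gen_sub; right.
case: (classic (sub_incl I M)) => [|nI]; first by left.
case: (classic (sub_incl J M)) => [|nJ]; first by right.
have [s [Ms Gs]] := ext I tI nI.
have [t [Mt Gt]] := ext J tJ nJ.
have [u [Mu hu]] := hclos s t Ms Mt.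
exfalso; apply: (aM u Mu); apply: hu => // X Y hX hY.
have hGG : tens_incl (gen_ideal (fun X => M X \/ I X)) (gen_ideal (fun X => M X \/ J X)) M.
  apply: lift_both => //.
  - move=> C Y0 [MY|JY]; [left; apply: ti_tensL tM MY | right; apply: ti_tensL tJ JY].
  - move=> X0 Y0 [MX|IX] [MY|JY].
    + exact: ti_tensR tM MX.
    + exact: ti_tensR tM MX.
    + exact: ti_tensL tM MY.
    + exact: hIJ.
apply: hGG.
- by apply: (gen_min (gen_ti _) _ hX) => Z ->.
- by apply: (gen_min (gen_ti _) _ hY) => Z ->.
Qed.

End Prime.
Section Main.
Variable K : MDC.
Implicit Types X Y Z W S : K.
Implicit Types I J M L P : subcat K.

Lemma prime_ti P : prime_ideal P -> thick_ideal P.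
Proof. by case. Qed.

Lemma prime_no_unit P : prime_ideal P -> ~ P tunit.
Proof.
move=> [tP [X nX] _] h; apply: nX; exact: ti_unit tP h X.
Qed.

Lemma proper_no_unit I : thick_ideal I -> proper_id I -> ~ I tunit.
Proof. by move=> tI [X nX] h; apply: nX; exact: ti_unit tI h X. Qed.

Lemma prime_exists I : thick_ideal I -> proper_id I ->
  exists P, prime_ideal P /\ sub_incl I P.
Proof.
move=> tI pI.
have [| | |P [hP sIP _]] := @avoid K (fun X => X = tunit) I tI.
- by exists tunit.
- move=> s t -> ->; exists tunit; split=> // M tM hM.
  apply: (ti_iso tM (iso_lunit tunit)); apply: hM; exact: principal_self.
- by move=> s ->; apply: proper_no_unit.
- by exists P.
Qed.

Lemma prime_principal P a b : prime_ideal P ->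
  tens_incl (principal a) (principal b) P -> P a \/ P b.
Proof.
move=> [tP _ hP] h; case: (hP _ _ (gen_ti _) (gen_ti _) h) => s;
  [left | right]; apply: s; exact: principal_self.
Qed.

Lemma principal_sub I a : thick_ideal I -> I a -> sub_incl (principal a) I.
Proof. by move=> tI Ia; apply: gen_min tI _ => X ->. Qed.

Lemma gen_zero (S : subcat K) Z : is_zero_obj Z -> gen_ideal S Z.
Proof. move=> hz; exact: ts_zero (ti_ts (gen_ti S)) hz. Qed.

Lemma a_to_b I J : thick_ideal I -> thick_ideal J -> proper_id I -> proper_id J ->
  coprime_id I J -> complementary I J ->
  exists A B : K,
      [/\ proper_id (principal A), proper_id (principal B),
          coprime_id (principal A) (principal B)
        & complementary (principal A) (principal B)].
Proof.
move=> tI tJ [XI nXI] [XJ nXJ] cop comp.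
pose T := fun X => exists A B, [/\ I A, J B & gen_ideal (fun Y => Y = A \/ Y = B) X].
have [Z0 hz] := tc_zero K.
have tT : thick_ideal T.
  apply: mk_ti; last 2 first.
  - move=> X Y [A [B [IA JB G]]]; exists A, B; split=> //.
    exact: ti_tensR (gen_ti _) G.
  - move=> X Y [A [B [IA JB G]]]; exists A, B; split=> //.
    exact: ti_tensL (gen_ti _) G.
  apply: mk_ts.
  - move=> Z hZ; exists Z0, Z0; split; try exact: gen_zero.
    + exact: ts_zero (ti_ts tI) hz.
    + exact: ts_zero (ti_ts tJ) hz.
  - move=> X Y hXY [A [B [IA JB G]]]; exists A, B; split=> //.
    exact: ti_iso (gen_ti _) hXY G.
  - move=> X [A [B [IA JB G]]]; exists A, B; split=> //.
    exact/(ts_sh X (ti_ts (gen_ti _))).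
  - move=> X [A [B [IA JB G]]]; exists A, B; split=> //.
    exact/(ts_sh X (ti_ts (gen_ti _))).
  - move=> X Y Z f g h d [A [B [IA JB G]]] [A' [B' [IA' JB' G']]].
    have [A2 [IA2 sA sA']] := ti_biprod tI IA IA'.
    have [B2 [JB2 sB sB']] := ti_biprod tJ JB JB'.
    exists A2, B2; split=> //.
    have tG2 := gen_ti (fun Y => Y = A2 \/ Y = B2).
    have hA2 : gen_ideal (fun Y => Y = A2 \/ Y = B2) A2 by apply: gen_sub; left.
    have hB2 : gen_ideal (fun Y => Y = A2 \/ Y = B2) B2 by apply: gen_sub; right.
    apply: ts_cone (ti_ts tG2) d _ _.
    + apply: (gen_min tG2 _ G) => W [->|->].
      * exact: ts_summand (ti_ts tG2) sA hA2.
      * exact: ts_summand (ti_ts tG2) sB hB2.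
    + apply: (gen_min tG2 _ G') => W [->|->].
      * exact: ts_summand (ti_ts tG2) sA' hA2.
      * exact: ts_summand (ti_ts tG2) sB' hB2.
  - move=> X S hs [A [B [IA JB G]]]; exists A, B; split=> //.
    exact: ts_summand (ti_ts (gen_ti _)) hs G.
have sUT : sub_incl (fun X => I X \/ J X) T.
  move=> X [IX|JX].
  - exists X, Z0; split=> //; first exact: ts_zero (ti_ts tJ) hz.
    by apply: gen_sub; left.
  - exists Z0, X; split=> //; first exact: ts_zero (ti_ts tI) hz.
    by apply: gen_sub; right.
have [A [B [IA JB G1]]] := gen_min tT sUT (cop tunit).
have sAI := principal_sub tI IA.
have sBJ := principal_sub tJ JB.
exists A, B; split.
- by exists XI => /sAI.
- by exists XJ => /sBJ.
- move=> X.
  set Gg := gen_ideal _.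
  have tGg : thick_ideal Gg := gen_ti _.
  apply: (ti_unit tGg); apply: (gen_min tGg _ G1) => W [->|->];
    apply: gen_sub; [left|right]; exact: principal_self.
- by move=> X [/sAI hA /sBJ hB]; apply: comp.
Qed.

Lemma b_to_a (A B : K) :
  [/\ proper_id (principal A), proper_id (principal B),
      coprime_id (principal A) (principal B)
    & complementary (principal A) (principal B)] ->
  exists I J : subcat K,
      [/\ thick_ideal I /\ thick_ideal J, proper_id I, proper_id J, coprime_id I J
        & complementary I J].
Proof.
move=> [h1 h2 h3 h4]; exists (principal A), (principal B); split=> //.
split; exact: gen_ti.
Qed.

Lemma b_to_c (A B : K) :
  [/\ proper_id (principal A), proper_id (principal B),
      coprime_id (principal A) (principal B)
    & complementary (principal A) (principal B)] -> spc_disconnected K.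
Proof.
move=> [pA pB cop comp].
have ex : forall a, proper_id (principal a) -> exists P : Spc K, sval P a.
  move=> a pa; have [P [hP sP]] := prime_exists (gen_ti _) pa.
  by exists (exist _ P hP); apply: sP; apply: principal_self.
exists (fun p => Vsupp A p), (fun p => Vsupp B p); split.
- split.
  + by exists (fun X => X = A) => p; split; [move=> h _ -> | move=> h; apply: h].
  + by exists (fun X => X = B) => p; split; [move=> h _ -> | move=> h; apply: h].
- by have [P hP] := ex A pA; exists P => /(_ hP).
- by have [P hP] := ex B pB; exists P => /(_ hP).
- move=> [P hP] [nA nB] /=.
  have tP := prime_ti hP.
  have : tens_incl (principal A) (principal B) P.
    move=> X Y hX hY; apply: (comp (tens X Y) _ P hP); split.
    + exact: ti_tensR (gen_ti _) hX.
    + exact: ti_tensL (gen_ti _) hY.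
  by move/(prime_principal hP) => [].
- move=> [P hP]; rewrite /Vsupp /=.
  case: (classic (P A)) => PA; last by left.
  case: (classic (P B)) => PB; last by right.
  exfalso; apply: (prime_no_unit hP).
  apply: (gen_min (prime_ti hP) _ (cop tunit)) => X [hX|hX].
  + exact: principal_sub (prime_ti hP) PA _ hX.
  + exact: principal_sub (prime_ti hP) PB _ hX.
Qed.

End Main.
Fixpoint memP (T : Type) (y : T) (l : seq T) : Prop :=
  match l with [::] => False | x :: l' => x = y \/ memP y l' end.

Lemma memP_cat (T : Type) (y : T) l1 l2 : memP y l1 \/ memP y l2 -> memP y (l1 ++ l2).
Proof.
elim: l1 => [|x l1 IH] /=.
  by case.
case=> [[->|h]|h]; first by left.
- by right; apply: IH; left.
- by right; apply: IH; right.
Qed.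

Lemma memP_cat_inv (T : Type) (y : T) l1 l2 : memP y (l1 ++ l2) -> memP y l1 \/ memP y l2.
Proof.
elim: l1 => [|x l1 IH] /=; first by right.
case=> [->|/IH [h|h]]; by [left; left | left; right | right].
Qed.

Section CtoA.
Variable K : MDC.
Implicit Types X Y Z W : K.
Implicit Types I J M L P : subcat K.

Fixpoint Tprod (S1 : K -> Prop) (l : seq K) : subcat K :=
  match l with
  | [::] => fun _ => True
  | y :: l' => gen_ideal (fun X => exists A B,
       [/\ S1 y -> principal y A, Tprod S1 l' B & X = tens A B])
  end.

Lemma Fy_ti (S1 : K -> Prop) y : thick_ideal (fun A => S1 y -> principal y A).
Proof.
apply: (ti_ext _ (@inter_ti K unit (fun _ => S1 y) (fun _ => principal y) (fun _ _ => gen_ti _))).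
by move=> X; split=> [h Sy | h [] Sy]; [apply: h tt Sy | apply: h].
Qed.

Lemma Tprod_ti S1 l : thick_ideal (Tprod S1 l).
Proof. by case: l => [|y l] /=; [apply: all_ti | apply: gen_ti]. Qed.

Lemma Tprod_sub S1 l P : prime_ideal P ->
  (exists y, [/\ memP y l, S1 y & P y]) -> sub_incl (Tprod S1 l) P.
Proof.
move=> hP; have tP := prime_ti hP.
elim: l => [|x l IH] [y [/= ml Sy Py]] //.
apply: (gen_min tP) => X [A [B [hA hB ->]]].
case: ml => [e|ml].
- subst x; apply: (ti_tensR tP); exact: principal_sub tP Py _ (hA Sy).
- apply: (ti_tensL tP); apply: (IH _ _ hB); by exists y.
Qed.

Lemma Tprod_nsub S1 l P : prime_ideal P -> (forall A, S1 A -> ~ P A) ->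
  ~ sub_incl (Tprod S1 l) P.
Proof.
move=> hP hS; have tP := prime_ti hP.
elim: l => [|y l IH] /= h.
  exact: prime_no_unit hP (h tunit I).
have hinc : tens_incl (fun A => S1 y -> principal y A) (Tprod S1 l) P.
  by move=> A B hA hB; apply: h; apply: gen_sub; exists A, B.
have [_ _ hpr] := hP.
case: (hpr _ _ (Fy_ti S1 y) (Tprod_ti S1 l) hinc) => // sub.
case: (classic (S1 y)) => Sy.
- by apply: (hS y Sy); apply: sub => _; apply: principal_self.
- apply: (prime_no_unit hP); apply: sub => /Sy [].
Qed.

Lemma side (Z1 Z2 : Spc K -> Prop) (S1 S2 : K -> Prop) (l : seq K) (p : Spc K) :
  (forall q : Spc K, Z1 q <-> forall A, S1 A -> ~ sval q A) ->
  (forall q : Spc K, Z2 q <-> forall A, S2 A -> ~ sval q A) ->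
  (forall y, memP y l -> S1 y \/ S2 y) ->
  (forall P : Spc K, exists y, memP y l /\ sval P y) ->
  Z1 p -> sub_incl (fun X => forall q : Spc K, Z2 q -> sval q X) (sval p) -> False.
Proof.
move=> e1 e2 hl cov Z1p sJ.
apply: (Tprod_nsub (S1 := S1) (l := l) (proj2_sig p) (proj1 (e1 p) Z1p)).
move=> X hX; apply: sJ => q Z2q.
apply: (Tprod_sub (proj2_sig q) _ hX).
have [y [my qy]] := cov q; exists y; split=> //.
case: (hl y my) => // S2y.
by case: (proj1 (e2 q) Z2q y S2y).
Qed.

Lemma c_to_a_core (Z1 Z2 : Spc K -> Prop) (S1 S2 : K -> Prop) (l : seq K) :
  (forall q : Spc K, Z1 q <-> forall A, S1 A -> ~ sval q A) ->
  (forall q : Spc K, Z2 q <-> forall A, S2 A -> ~ sval q A) ->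
  (exists q, ~ Z1 q) -> (exists q, ~ Z2 q) -> (forall q, Z1 q \/ Z2 q) ->
  (forall y, memP y l -> S1 y \/ S2 y) ->
  (forall P : Spc K, exists y, memP y l /\ sval P y) ->
  exists I J : subcat K,
      [/\ thick_ideal I /\ thick_ideal J, proper_id I, proper_id J, coprime_id I J
        & complementary I J].
Proof.
move=> e1 e2 [p1 np1] [p2 np2] cov hl hcov.
pose I := fun X => forall q : Spc K, Z1 q -> sval q X.
pose J := fun X => forall q : Spc K, Z2 q -> sval q X.
have tI : thick_ideal I.
  by apply: inter_ti => q _; apply: prime_ti (proj2_sig q).
have tJ : thick_ideal J.
  by apply: inter_ti => q _; apply: prime_ti (proj2_sig q).
exists I, J; split=> //.
- have Z1p2 : Z1 p2 by case: (cov p2).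
  have [_ [X nX] _] := proj2_sig p2.
  by exists X => /(_ p2 Z1p2).
- have Z2p1 : Z2 p1 by case: (cov p1).
  have [_ [X nX] _] := proj2_sig p1.
  by exists X => /(_ p1 Z2p1).
- move=> X; apply: NNPP => nG.
  have [P [hP sP]] := prime_exists (gen_ti (fun Y => I Y \/ J Y)) (ex_intro _ X nG).
  pose p := exist _ P hP : Spc K.
  case: (cov p) => Zp.
  + apply: (side e1 e2 hl hcov Zp) => Y JY; apply: sP; apply: gen_sub; by right.
  + apply: (side e2 e1 _ hcov Zp) => [y /hl [] ?|Y IY]; [by right|by left|].
    by apply: sP; apply: gen_sub; left.
- move=> X [IX JX] P hP; pose p := exist _ P hP : Spc K.
  by case: (cov p) => Zp; [apply: (IX p) | apply: (JX p)].
Qed.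

End CtoA.
Section Compact.
Variable K : MDC.
Implicit Types X Y Z W : K.

Lemma key_gen (G s t : K) (Q : subcat K) : thick_generated_by G -> thick_ideal Q ->
  Q (tens s (tens G t)) -> tens_incl (principal s) (principal t) Q.
Proof.
move=> hG tQ hQ.
have hall : forall C, Q (tens s (tens C t)) :=
  hG (fun C => Q (tens s (tens C t))) (preR_ts t (preL_ts s (ti_ts tQ))) hQ.
pose B := fun Y => exists C, isomorphic (tens C t) Y.
have hB : forall C Y, B Y -> B (tens C Y).
  move=> C Y [C' h]; exists (tens C C').
  exact: iso_trans (iso_assoc C C' t) (tens_iso (iso_refl C) h).
have h0 : tens_incl (fun X => X = s) B Q.
  move=> X Y -> [C h]; exact: ti_iso tQ (tens_iso (iso_refl s) h) (hall C).
have hl := lift_both tQ hB h0.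
move=> X Y hX hY; apply: hl hX _.
apply: (gen_mono _ hY) => Y0 ->; exists tunit; exact: iso_lunit.
Qed.

Lemma compact_gen (S12 : K -> Prop) (G : K) : thick_generated_by G ->
  (forall q : Spc K, exists y, S12 y /\ sval q y) ->
  exists l, (forall y, memP y l -> S12 y) /\
            (forall q : Spc K, exists y, memP y l /\ sval q y).
Proof.
move=> hG H1.
pose Mset := fun X => exists l, (forall y, memP y l -> S12 y) /\
   forall q : Spc K, sval q X -> exists y, memP y l /\ sval q y.
pose L0 := gen_ideal (fun _ : K => False).
case: (classic (exists s, Mset s /\ L0 s)) => [[s [[l [hl hq]] Ls]]|nex].
  exists l; split=> // q; apply: hq.
  by apply: (gen_min (prime_ti (proj2_sig q)) _ Ls).
exfalso.
have [| | |P [hP _ aP]] := @avoid K Mset L0 (gen_ti _).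
- exists tunit, [::]; split=> // q hq.
  by case: (prime_no_unit (proj2_sig q) hq).
- move=> s t [ls [hls hqs]] [lt [hlt hqt]].
  exists (tens s (tens G t)); split.
  + exists (ls ++ lt); split.
    * by move=> y my; case: (memP_cat_inv my) => m; [apply: hls | apply: hlt].
    * move=> q hq.
      have hk := key_gen hG (prime_ti (proj2_sig q)) hq.
      case: (prime_principal (proj2_sig q) hk) => [hs|ht].
      - have [y [my qy]] := hqs q hs; exists y; split=> //.
        by apply: memP_cat; left.
      - have [y [my qy]] := hqt q ht; exists y; split=> //.
        by apply: memP_cat; right.
  + move=> M tM hM; apply: hM; first exact: principal_self.
    exact: (@ti_tensL K (principal t) t G (gen_ti _) (principal_self (A:=t))).
- by move=> s Ms Ls; apply: nex; exists s.
- have [y [Sy Py]] := H1 (exist _ P hP).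
  apply: (aP y) Py; exists [:: y]; split.
  + by move=> z /= [<-|].
  + by move=> q qy; exists y; split=> //; left.
Qed.

Lemma compact_noeth (S12 : K -> Prop) : spc_noetherian K ->
  (forall q : Spc K, exists y, S12 y /\ sval q y) ->
  exists l, (forall y, memP y l -> S12 y) /\
            (forall q : Spc K, exists y, memP y l /\ sval q y).
Proof.
move=> hN H1; apply: NNPP => nex.
pose Cl := fun (l : seq K) (q : Spc K) => forall y, memP y l -> ~ sval q y.
have hR : forall l : seq K, exists y, (forall z, memP z l -> S12 z) ->
    S12 y /\ exists q : Spc K, Cl l q /\ sval q y.
  move=> l; case: (classic (forall z, memP z l -> S12 z)) => hl; last first.
    by exists tunit => /hl.
  have [q Cq] : exists q : Spc K, Cl l q.
    apply: NNPP => nq; apply: nex; exists l; split=> // q.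
    apply: NNPP => nq'; apply: nq; exists q => y my qy; apply: nq'.
    by exists y.
  have [y [Sy qy]] := H1 q.
  by exists y => _; split=> //; exists q.
pose g := fun l => proj1_sig (constructive_indefinite_description _ (hR l)).
have hg : forall l, (forall z, memP z l -> S12 z) ->
    S12 (g l) /\ exists q : Spc K, Cl l q /\ sval q (g l).
  by move=> l; rewrite /g; case: (constructive_indefinite_description _ _).
pose sq := fix sq (n : nat) : seq K := if n is n'.+1 then g (sq n') :: sq n' else [::].
have hsq : forall n z, memP z (sq n) -> S12 z.
  elim=> [|n IH] z //= [<-|m]; last exact: IH.
  exact: (proj1 (hg _ IH)).
have hc : forall n, spc_closed (Cl (sq n)).
  move=> n; exists (fun y => memP y (sq n)) => q; split.
  + by move=> h A mA; apply: h.
  + by move=> h y my; apply: h.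
have hd : forall n q, Cl (sq n.+1) q -> Cl (sq n) q.
  by move=> n q /= h y my; apply: h; right.
have [N hNN] := hN _ hc hd.
have [_ [q [Cq qg]]] := hg _ (hsq N).
have := proj2 (hNN N.+1 (leqnSn N) q) Cq.
by move/(_ (g (sq N))) => /=; apply=> //; left.
Qed.

End Compact.
Theorem theoremB (K : MDC) :
  let cond_a := exists I J : subcat K,
      [/\ thick_ideal I /\ thick_ideal J, proper_id I, proper_id J, coprime_id I J
        & complementary I J] in
  let cond_b := exists A B : K,
      [/\ proper_id (principal A), proper_id (principal B),
          coprime_id (principal A) (principal B)
        & complementary (principal A) (principal B)] in
  let cond_c := spc_disconnected K in
  [/\ cond_a <-> cond_b,
      cond_a -> cond_c
    & ((exists G : K, thick_generated_by G) \/ spc_noetherian K) ->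
      cond_c -> cond_a].
Proof.
cbv zeta; split.
- split.
  + move=> [I [J [[tI tJ] pI pJ cop cmp]]]; exact: (a_to_b tI tJ pI pJ cop cmp).
  + by move=> [A [B h]]; apply: b_to_a h.
- move=> [I [J [[tI tJ] pI pJ cop cmp]]].
  have [A [B h]] := a_to_b tI tJ pI pJ cop cmp.
  exact: b_to_c h.
- move=> hyp [Z1 [Z2 [[c1 c2] n1 n2 dis cov]]].
  have [S1 e1] := c1; have [S2 e2] := c2.
  have H1 : forall q : Spc K, exists y, (S1 y \/ S2 y) /\ sval q y.
    move=> q; apply: NNPP => nq; apply: (dis q); split.
    + apply: (proj2 (e1 q)) => A SA qA; apply: nq; exists A; split=> //; by left.
    + apply: (proj2 (e2 q)) => A SA qA; apply: nq; exists A; split=> //; by right.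
  have [l [hl hcov]] : exists l, (forall y, memP y l -> S1 y \/ S2 y) /\
            (forall q : Spc K, exists y, memP y l /\ sval q y).
    case: hyp => [[G hG]|hN]; [exact: compact_gen hG H1 | exact: compact_noeth hN H1].
  exact: c_to_a_core e1 e2 n1 n2 cov hl hcov.
Qed.
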